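(* Let $k_0\ge 0$ and $c\in\mathbb{R}$ with $|c|<\sqrt{1+k_0^2}$. The circles in $\mathbb{S}^2$ of constant geodesic curvature $k_0$ which are not parallels (i.e. not of the form $\{z=\text{const}\}$) are the only arc-length parametrized spherical curves $\xi=(x,y,z)$ (up to rotations around the $z$-axis) whose spherical angular momentum, as a function of $z$, is $\mathcal K(z)=k_0z+c$.
   Context: For an arc-length parametrized curve $\xi=(x,y,z)$ in the unit sphere $\mathbb{S}^2\subset\mathbb{R}^3$, its spherical angular momentum is $\mathcal K=\dot x\,y-x\,\dot y=-\det(\xi,\dot\xi,(0,0,1))$, where the dot denotes the derivative with respect to arc length; its geodesic curvature is $\kappa=\det(\xi,\dot\xi,\ddot\xi)$. *)

(* Defs.v *)
From Stdlib Require Import Reals.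
From Coquelicot Require Import Coquelicot.
Open Scope R_scope.

(* A curve xi = (x,y,z) : I -> R^3 given by its three coordinate functions,
   defined on the open interval I = ]a, b[ with a, b in R ∪ {±oo}. *)
Definition in_I (a b : Rbar) (s : R) : Prop := Rbar_lt a s /\ Rbar_lt s b.

Definition det3 (u v w : R * R * R) : R :=
  let '(u1, u2, u3) := u in
  let '(v1, v2, v3) := v in
  let '(w1, w2, w3) := w in
  u1 * (v2 * w3 - v3 * w2) - u2 * (v1 * w3 - v3 * w1) + u3 * (v1 * w2 - v2 * w1).

Definition xi (x y z : R -> R) (s : R) : R * R * R := (x s, y s, z s).
Definition dxi (x y z : R -> R) (s : R) : R * R * R :=
  (Derive x s, Derive y s, Derive z s).
Definition ddxi (x y z : R -> R) (s : R) : R * R * R :=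
  (Derive (Derive x) s, Derive (Derive y) s, Derive (Derive z) s).

Definition C2_on (a b : Rbar) (f : R -> R) : Prop :=
  forall s, in_I a b s ->
    ex_derive f s /\ ex_derive (Derive f) s /\ continuous (Derive (Derive f)) s.

Definition arclength_spherical_curve (a b : Rbar) (x y z : R -> R) : Prop :=
  C2_on a b x /\ C2_on a b y /\ C2_on a b z /\
  (forall s, in_I a b s -> x s ^ 2 + y s ^ 2 + z s ^ 2 = 1) /\
  (forall s, in_I a b s -> Derive x s ^ 2 + Derive y s ^ 2 + Derive z s ^ 2 = 1).

Definition ang_mom (x y z : R -> R) (s : R) : R :=
  Derive x s * y s - x s * Derive y s.

Definition geod_curv (x y z : R -> R) (s : R) : R :=
  det3 (xi x y z s) (dxi x y z s) (ddxi x y z s).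

(* xi lies on a circle of S^2 (intersection of S^2 with the plane <p,n> = d,
   n a unit vector, |d| < 1) which is not a parallel, i.e. the plane is not
   horizontal ({z = const}), and xi has constant geodesic curvature k0. *)
Definition nonparallel_circle_of_curvature (a b : Rbar) (x y z : R -> R) (k0 : R) : Prop :=
  (exists n1 n2 n3 d : R,
      n1 ^ 2 + n2 ^ 2 + n3 ^ 2 = 1 /\ Rabs d < 1 /\
      ~ (n1 = 0 /\ n2 = 0) /\
      forall s, in_I a b s -> n1 * x s + n2 * y s + n3 * z s = d) /\
  (forall s, in_I a b s -> geod_curv x y z s = k0).

(* z is not constant on any open subinterval of I (so that K can be regarded
   as a function of z) *)
Definition z_nowhere_locally_constant (a b : Rbar) (z : R -> R) : Prop :=
  forall u v, in_I a b u -> in_I a b v -> u < v ->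
    exists s, u < s < v /\ Derive z s <> 0.

(* Main.v *)
Require Import Defs.
From Stdlib Require Import Reals Lra Psatz.
From Coquelicot Require Import Coquelicot.
Open Scope R_scope.

Lemma in_I_locally a b s : in_I a b s -> locally s (in_I a b).
Proof.
  intros H. apply (open_and (fun u : R => Rbar_lt a u) (fun u : R => Rbar_lt u b)).
  - apply open_Rbar_gt.
  - apply open_Rbar_lt.
  - exact H.
Qed.

Lemma deriv_const_zero a b (f : R -> R) (s l C : R) : in_I a b s -> is_derive f s l ->
  (forall t, in_I a b t -> f t = C) -> l = 0.
Proof.
  intros Hs Hd Hc.
  assert (H0 : is_derive (fun _ : R => C) s 0) by apply (is_derive_const C s).
  assert (H1 : is_derive f s 0).
  { apply (is_derive_ext_loc (fun _ => C)); [|exact H0].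
    generalize (in_I_locally a b s Hs). apply filter_imp. intros t Ht. symmetry; auto. }
  apply is_derive_unique in Hd. apply is_derive_unique in H1. congruence.
Qed.

Lemma in_I_between a b s t r : in_I a b s -> in_I a b t -> Rmin s t <= r <= Rmax s t -> in_I a b r.
Proof.
  unfold in_I. intros [H1 H2] [H3 H4] Hr.
  destruct (Rle_dec s t).
  - rewrite Rmin_left, Rmax_right in Hr by lra.
    destruct a, b; simpl in *; try tauto; lra.
  - rewrite Rmin_right, Rmax_left in Hr by lra.
    destruct a, b; simpl in *; try tauto; lra.
Qed.

Lemma const_on_I a b (f : R -> R) : (forall t, in_I a b t -> is_derive f t 0) ->
  forall s t, in_I a b s -> in_I a b t -> f s = f t.
Proof.
  intros Hd s t Hs Ht.
  destruct (MVT_gen f s t (fun _ => 0)) as [r [_ Hr]].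
  - intros u Hu. apply Hd. apply (in_I_between a b s t); auto. lra.
  - intros u Hu. apply continuity_pt_filterlim. apply (ex_derive_continuous (K := R_AbsRing) (V := R_NormedModule)).
    eexists. apply Hd. apply (in_I_between a b s t); auto.
  - lra.
Qed.

Lemma exists_in_I a b : Rbar_lt a b -> exists s, in_I a b s.
Proof.
  unfold in_I; destruct a as [a| |], b as [b| |]; simpl; intros H; try tauto.
  - exists ((a+b)/2); lra.
  - exists (a+1); lra.
  - exists (b-1); lra.
  - exists 0; auto.
Qed.

Lemma frame (u1 u2 u3 v1 v2 v3 w1 w2 w3 : R) :
  u1*u1+u2*u2+u3*u3 = 1 -> v1*v1+v2*v2+v3*v3 = 1 -> u1*v1+u2*v2+u3*v3 = 0 ->
  u1*w1+u2*w2+u3*w3 = -1 -> v1*w1+v2*w2+v3*w3 = 0 ->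
  let k := u1 * (v2 * w3 - v3 * w2) - u2 * (v1 * w3 - v3 * w1) + u3 * (v1 * w2 - v2 * w1) in
  u2*w3 - u3*w2 = -k*v1 /\ u3*w1 - u1*w3 = -k*v2 /\ u1*w2 - u2*w1 = -k*v3 /\
  w1*w1+w2*w2+w3*w3 = 1 + k*k.
Proof.
  intros Hu Hv Huv Huw Hvw k.
  set (uu := u1*u1+u2*u2+u3*u3) in *. set (vv := v1*v1+v2*v2+v3*v3) in *.
  set (ww := w1*w1+w2*w2+w3*w3).
  set (uv := u1*v1+u2*v2+u3*v3) in *. set (uw := u1*w1+u2*w2+u3*w3) in *.
  set (vw := v1*w1+v2*w2+v3*w3) in *.
  assert (G : k*k = uu*vv*ww + 2*uv*vw*uw - uu*vw*vw - vv*uw*uw - ww*uv*uv)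
    by (unfold k, uu, vv, ww, uv, uw, vw; ring).
  rewrite Hu, Hv, Huv, Huw, Hvw in G.
  assert (S : (u2*w3 - u3*w2 + k*v1)^2 + (u3*w1 - u1*w3 + k*v2)^2 + (u1*w2 - u2*w1 + k*v3)^2
     = uu*ww - uw*uw - 2*k*k + k*k*vv) by (unfold k, uu, vv, ww, uv, uw, vw; ring).
  rewrite Hu, Hv, Huw in S.
  assert (S0 : (u2*w3 - u3*w2 + k*v1)^2 + (u3*w1 - u1*w3 + k*v2)^2 + (u1*w2 - u2*w1 + k*v3)^2 = 0) by (fold ww in S; lra).
  assert (A1 := pow2_ge_0 (u2*w3 - u3*w2 + k*v1)).
  assert (A2 := pow2_ge_0 (u3*w1 - u1*w3 + k*v2)).
  assert (A3 := pow2_ge_0 (u1*w2 - u2*w1 + k*v3)).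
  assert (B1 : (u2*w3 - u3*w2 + k*v1)^2 = 0) by lra.
  assert (B2 : (u3*w1 - u1*w3 + k*v2)^2 = 0) by lra.
  assert (B3 : (u1*w2 - u2*w1 + k*v3)^2 = 0) by lra.
  assert (C1 : u2*w3 - u3*w2 + k*v1 = 0) by nra.
  assert (C2 : u3*w1 - u1*w3 + k*v2 = 0) by nra.
  assert (C3 : u1*w2 - u2*w1 + k*v3 = 0) by nra.
  repeat split; try lra.
Qed.

Ltac fix_eta :=
  repeat match goal with |- context [Derive (fun t : R => ?f t)] => change (fun t : R => f t) with f end.

Lemma curve_facts a b x y z s : arclength_spherical_curve a b x y z -> in_I a b s ->
  let x1 := Derive x s in let y1 := Derive y s in let z1 := Derive z s in
  let x2 := Derive (Derive x) s in let y2 := Derive (Derive y) s in let z2 := Derive (Derive z) s in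
  let k := geod_curv x y z s in
  x s * x s + y s * y s + z s * z s = 1 /\ x1*x1+y1*y1+z1*z1 = 1 /\
  x s * x1 + y s * y1 + z s * z1 = 0 /\ x s * x2 + y s * y2 + z s * z2 = -1 /\
  x1*x2+y1*y2+z1*z2 = 0 /\
  y s * z2 - z s * y2 = -k*x1 /\ z s * x2 - x s * z2 = -k*y1 /\ x s * y2 - y s * x2 = -k*z1 /\
  x2*x2+y2*y2+z2*z2 = 1 + k*k.
Proof.
  intros [Cx [Cy [Cz [Hs Hv]]]] HI x1 y1 z1 x2 y2 z2 k.
  destruct (Cx s HI) as [dx [ddx _]]. destruct (Cy s HI) as [dy [ddy _]]. destruct (Cz s HI) as [dz [ddz _]].
  assert (E1 : x s * x s + y s * y s + z s * z s = 1) by (rewrite <- (Hs s HI); ring).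
  assert (E2 : x1*x1+y1*y1+z1*z1 = 1) by (rewrite <- (Hv s HI); unfold x1, y1, z1; ring).
  assert (E3 : x s * x1 + y s * y1 + z s * z1 = 0).
  { assert (D : is_derive (fun t => x t ^ 2 + y t ^ 2 + z t ^ 2) s
        (2 * (x s * x1 + y s * y1 + z s * z1))).
    { auto_derive. repeat split; auto. fix_eta. unfold x1, y1, z1. ring. }
    assert (L := deriv_const_zero a b _ s _ 1 HI D Hs). lra. }
  assert (E4 : x1*x1+y1*y1+z1*z1 + (x s * x2 + y s * y2 + z s * z2) = 0).
  { assert (D : is_derive (fun t => x t * Derive x t + y t * Derive y t + z t * Derive z t) s
        (x1*x1+y1*y1+z1*z1 + (x s * x2 + y s * y2 + z s * z2))).
    { auto_derive. repeat split; auto. fix_eta. unfold x1, y1, z1, x2, y2, z2. ring. }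
    refine (deriv_const_zero a b _ s _ 0 HI D _).
    intros t Ht. destruct (Cx t Ht) as [dxt _]. destruct (Cy t Ht) as [dyt _]. destruct (Cz t Ht) as [dzt _].
    assert (D2 : is_derive (fun t => x t ^ 2 + y t ^ 2 + z t ^ 2) t
        (2 * (x t * Derive x t + y t * Derive y t + z t * Derive z t))).
    { auto_derive. repeat split; auto. fix_eta. ring. }
    assert (L := deriv_const_zero a b _ t _ 1 Ht D2 Hs). lra. }
  assert (E5 : x1*x2+y1*y2+z1*z2 = 0).
  { assert (D : is_derive (fun t => Derive x t ^ 2 + Derive y t ^ 2 + Derive z t ^ 2) s
        (2 * (x1*x2+y1*y2+z1*z2))).
    { auto_derive. repeat split; auto. fix_eta. unfold x1, y1, z1, x2, y2, z2. ring. }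
    assert (L := deriv_const_zero a b _ s _ 1 HI D Hv). lra. }
  assert (F := frame (x s) (y s) (z s) x1 y1 z1 x2 y2 z2 E1 E2 E3 ltac:(lra) E5).
  simpl in F.
  assert (Hk : k = x s * (y1 * z2 - z1 * y2) - y s * (x1 * z2 - z1 * x2) + z s * (x1 * y2 - y1 * x2)) by reflexivity.
  rewrite <- Hk in F.
  repeat split; try tauto; lra.
Qed.

Lemma cont_of_der (f : R -> R) s : ex_derive f s -> continuity_pt f s.
Proof. intros H. apply continuity_pt_filterlim. apply (ex_derive_continuous (K := R_AbsRing) (V := R_NormedModule)). exact H. Qed.

Lemma kappa_cont a b x y z s : arclength_spherical_curve a b x y z -> in_I a b s ->
  continuity_pt (geod_curv x y z) s.
Proof.
  intros [Cx [Cy [Cz _]]] HI.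
  destruct (Cx s HI) as [dx [ddx cx]]. destruct (Cy s HI) as [dy [ddy cy]]. destruct (Cz s HI) as [dz [ddz cz]].
  apply cont_of_der in dx, dy, dz, ddx, ddy, ddz.
  apply continuity_pt_filterlim in cx, cy, cz.
  change (continuity_pt (fun t => x t * (Derive y t * Derive (Derive z) t - Derive z t * Derive (Derive y) t)
     - y t * (Derive x t * Derive (Derive z) t - Derive z t * Derive (Derive x) t)
     + z t * (Derive x t * Derive (Derive y) t - Derive y t * Derive (Derive x) t)) s).
  repeat first [apply continuity_pt_minus | apply continuity_pt_plus | apply continuity_pt_mult | assumption].
Qed.

Lemma vec_alg (u1 u2 u3 v1 v2 v3 k : R) :
  u1*u1+u2*u2+u3*u3 = 1 -> v1*v1+v2*v2+v3*v3 = 1 -> u1*v1+u2*v2+u3*v3 = 0 ->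
  let V1 := u2*v3 - u3*v2 + k*u1 in let V2 := u3*v1 - u1*v3 + k*u2 in
  let V3 := u1*v2 - u2*v1 + k*u3 in
  V1*V1+V2*V2+V3*V3 = 1 + k*k /\ V1*u1+V2*u2+V3*u3 = k /\ V1*v1+V2*v2+V3*v3 = 0.
Proof.
  intros Hu Hv Huv V1 V2 V3.
  assert (E1 : V1*V1+V2*V2+V3*V3 = (u1*u1+u2*u2+u3*u3)*(v1*v1+v2*v2+v3*v3) - (u1*v1+u2*v2+u3*v3)^2
     + k*k*(u1*u1+u2*u2+u3*u3)) by (unfold V1, V2, V3; ring).
  assert (E2 : V1*u1+V2*u2+V3*u3 = k*(u1*u1+u2*u2+u3*u3)) by (unfold V1, V2, V3; ring).
  assert (E3 : V1*v1+V2*v2+V3*v3 = k*(u1*v1+u2*v2+u3*v3)) by (unfold V1, V2, V3; ring).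
  rewrite Hu, Hv, Huv in E1. rewrite Hu in E2. rewrite Huv in E3. split; [|split]; lra.
Qed.

Lemma sqrt_sq_lt (c L : R) : c*c < L -> Rabs c < sqrt L.
Proof.
  intros H. rewrite <- sqrt_Rsqr_abs. apply sqrt_lt_1_alt. unfold Rsqr. split; nra.
Qed.

Lemma angmom_deriv a b x y z (k0 : R) s : arclength_spherical_curve a b x y z -> in_I a b s ->
  is_derive (fun t => ang_mom x y z t - k0 * z t) s
     (geod_curv x y z s * Derive z s - k0 * Derive z s).
Proof.
  intros HC HI. assert (F := curve_facts a b x y z s HC HI). simpl in F.
  destruct HC as [Cx [Cy [Cz _]]].
  destruct (Cx s HI) as [dx [ddx _]]. destruct (Cy s HI) as [dy [ddy _]]. destruct (Cz s HI) as [dz [ddz _]].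
  unfold ang_mom. auto_derive. repeat split; auto. fix_eta.
  destruct F as [_ [_ [_ [_ [_ [_ [_ [F _]]]]]]]]. 
  assert (G : Derive (Derive x) s * y s - x s * Derive (Derive y) s = geod_curv x y z s * Derive z s) by lra.
  rewrite <- G. ring.
Qed.

Theorem corollary3p4 (k0 c : R) (a b : Rbar) (x y z : R -> R) :
  0 <= k0 ->
  Rabs c < sqrt (1 + k0 ^ 2) ->
  Rbar_lt a b ->
  arclength_spherical_curve a b x y z ->
  ((z_nowhere_locally_constant a b z /\
    (forall s, in_I a b s -> ang_mom x y z s = k0 * z s + c)) ->
   nonparallel_circle_of_curvature a b x y z k0) /\
  (nonparallel_circle_of_curvature a b x y z k0 ->
   exists c' : R, Rabs c' < sqrt (1 + k0 ^ 2) /\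
     (forall s, in_I a b s -> ang_mom x y z s = k0 * z s + c')).
Proof.
  intros Hk0 Hc Hab HC.
  destruct (exists_in_I a b Hab) as [s0 H0].
  set (V1 := fun t => y t * Derive z t - z t * Derive y t + k0 * x t).
  set (V2 := fun t => z t * Derive x t - x t * Derive z t + k0 * y t).
  set (V3 := fun t => x t * Derive y t - y t * Derive x t + k0 * z t).
  assert (HVa : forall t, in_I a b t ->
     V1 t * V1 t + V2 t * V2 t + V3 t * V3 t = 1 + k0 * k0 /\
     V1 t * x t + V2 t * y t + V3 t * z t = k0 /\
     V1 t * Derive x t + V2 t * Derive y t + V3 t * Derive z t = 0).
  { intros t Ht. assert (F := curve_facts a b x y z t HC Ht). simpl in F.
    destruct F as [E1 [E2 [E3 _]]].
    exact (vec_alg (x t) (y t) (z t) (Derive x t) (Derive y t) (Derive z t) k0 E1 E2 E3). }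
  assert (HVw : forall t, in_I a b t ->
     V1 t * Derive (Derive x) t + V2 t * Derive (Derive y) t + V3 t * Derive (Derive z) t
     = geod_curv x y z t + k0 * (x t * Derive (Derive x) t + y t * Derive (Derive y) t + z t * Derive (Derive z) t)).
  { intros t Ht. unfold V1, V2, V3, geod_curv, det3, xi, dxi, ddxi. ring. }
  split.
  -
    intros [Hnlc HK].
    assert (H1 : forall s, in_I a b s -> (geod_curv x y z s - k0) * Derive z s = 0).
    { intros s Hs.
      assert (D := angmom_deriv a b x y z k0 s HC Hs).
      assert (L := deriv_const_zero a b _ s _ c Hs D).
      assert (L' : geod_curv x y z s * Derive z s - k0 * Derive z s = 0).
      { apply L. intros t Ht. rewrite (HK t Ht). ring. }
      lra. }
    assert (Hkap : forall s, in_I a b s -> geod_curv x y z s = k0).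
    { intros s Hs. destruct (Req_dec (geod_curv x y z s) k0) as [E|E]; [exact E|exfalso].
      assert (Hcont := kappa_cont a b x y z s HC Hs).
      apply continuity_pt_filterlim in Hcont.
      assert (eps : 0 < Rabs (geod_curv x y z s - k0)) by (apply Rabs_pos_lt; lra).
      apply filterlim_locally with (eps := mkposreal _ eps) in Hcont.
      destruct (filter_and _ _ Hcont (in_I_locally a b s Hs)) as [del Hdel].
      set (u := s - del / 2). set (v := s + del / 2).
      assert (Hball : forall t, u <= t <= v -> ball s del t).
      { intros t Ht. change (Rabs (t - s) < del). unfold u, v in Ht.
        assert (Hd := cond_pos del). apply Rabs_def1; lra. }
      assert (Hd := cond_pos del).
      assert (Hu : in_I a b u) by (apply (Hdel u (Hball u ltac:(unfold u, v; lra)))).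
      assert (Hv : in_I a b v) by (apply (Hdel v (Hball v ltac:(unfold u, v; lra)))).
      destruct (Hnlc u v Hu Hv ltac:(unfold u, v; lra)) as [t [Ht Hz]].
      destruct (Hdel t (Hball t ltac:(lra))) as [Hb Hti].
      change (Rabs (geod_curv x y z t - geod_curv x y z s) < Rabs (geod_curv x y z s - k0)) in Hb.
      assert (H1t := H1 t Hti).
      apply Rmult_integral in H1t. destruct H1t as [H1t|H1t]; [|contradiction].
      replace (geod_curv x y z t) with k0 in Hb by lra.
      rewrite <- Rabs_Ropp in Hb. replace (- (k0 - geod_curv x y z s)) with (geod_curv x y z s - k0) in Hb by ring.
      lra. }
    assert (HVd : forall t, in_I a b t ->
      is_derive V1 t 0 /\ is_derive V2 t 0 /\ is_derive V3 t 0).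
    { intros t Ht. assert (F := curve_facts a b x y z t HC Ht). simpl in F.
      rewrite (Hkap t Ht) in F.
      destruct HC as [Cx [Cy [Cz _]]].
      destruct (Cx t Ht) as [dx [ddx _]]. destruct (Cy t Ht) as [dy [ddy _]]. destruct (Cz t Ht) as [dz [ddz _]].
      destruct F as [_ [_ [_ [_ [_ [F1 [F2 [F3 _]]]]]]]].
      unfold V1, V2, V3; split; [|split]; auto_derive; (repeat split; auto); fix_eta; lra. }
    assert (HV1 : forall t, in_I a b t -> V1 t = V1 s0) by (intros; apply (const_on_I a b); auto; intros; apply HVd; auto).
    assert (HV2 : forall t, in_I a b t -> V2 t = V2 s0) by (intros; apply (const_on_I a b); auto; intros; apply HVd; auto).
    assert (HV3 : forall t, in_I a b t -> V3 t = V3 s0) by (intros; apply (const_on_I a b); auto; intros; apply HVd; auto).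
    set (L := sqrt (1 + k0 ^ 2)).
    assert (HL : 0 < L) by (apply sqrt_lt_R0; nra).
    assert (HL2 : L * L = 1 + k0 * k0) by (unfold L; rewrite sqrt_sqrt; nra).
    split; [|exact Hkap].
    exists (V1 s0 / L), (V2 s0 / L), (V3 s0 / L), (k0 / L).
    destruct (HVa s0 H0) as [N1 [N2 N3]].
    split; [|split; [|split]].
    + replace ((V1 s0 / L) ^ 2 + (V2 s0 / L) ^ 2 + (V3 s0 / L) ^ 2) with
        ((V1 s0 * V1 s0 + V2 s0 * V2 s0 + V3 s0 * V3 s0) / (L * L)) by (field; lra).
      rewrite N1, HL2. field. nra.
    + rewrite Rabs_right by (apply Rle_ge; unfold Rdiv; apply Rmult_le_pos; [lra|left; apply Rinv_0_lt_compat; lra]).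
      apply Rmult_lt_reg_r with L; [lra|]. unfold Rdiv. rewrite Rmult_assoc, Rinv_l by lra. nra.
    + intros [Z1 Z2].
      assert (W1 : V1 s0 = 0) by (replace (V1 s0) with ((V1 s0 / L) * L) by (field; lra); rewrite Z1; ring).
      assert (W2 : V2 s0 = 0) by (replace (V2 s0) with ((V2 s0 / L) * L) by (field; lra); rewrite Z2; ring).
      assert (Hcs : c = - V3 s0).
      { assert (K0 := HK s0 H0). unfold ang_mom in K0. unfold V3. lra. }
      rewrite W1, W2 in N1.
      assert (Hc2 : Rabs c = L).
      { rewrite <- sqrt_Rsqr_abs. unfold L, Rsqr. f_equal. rewrite Hcs. nra. }
      unfold L in Hc2. lra.
    + intros t Ht. destruct (HVa t Ht) as [_ [M _]].
      rewrite <- (HV1 t Ht), <- (HV2 t Ht), <- (HV3 t Ht).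
      replace (V1 t / L * x t + V2 t / L * y t + V3 t / L * z t) with ((V1 t * x t + V2 t * y t + V3 t * z t) / L) by (field; lra).
      rewrite M. reflexivity.
  -
    intros [[n1 [n2 [n3 [d [Hn [Hd [Hnp Hpl]]]]]]] Hkap].
    exists (ang_mom x y z s0 - k0 * z s0).
    assert (Hconst : forall s, in_I a b s -> ang_mom x y z s - k0 * z s = ang_mom x y z s0 - k0 * z s0).
    { intros s Hs. apply (const_on_I a b (fun t => ang_mom x y z t - k0 * z t)); auto.
      intros t Ht. assert (D := angmom_deriv a b x y z k0 t HC Ht).
      rewrite (Hkap t Ht) in D. replace 0 with (k0 * Derive z t - k0 * Derive z t) by ring. exact D. }
    split; [|intros s Hs; specialize (Hconst s Hs); lra].
    pose proof HC as [Cx [Cy [Cz _]]].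
    assert (P1 : forall t, in_I a b t -> n1 * Derive x t + n2 * Derive y t + n3 * Derive z t = 0).
    { intros t Ht.
      destruct (Cx t Ht) as [dx _]. destruct (Cy t Ht) as [dy _]. destruct (Cz t Ht) as [dz _].
      assert (D : is_derive (fun t => n1 * x t + n2 * y t + n3 * z t) t
                   (n1 * Derive x t + n2 * Derive y t + n3 * Derive z t)).
      { auto_derive. repeat split; auto. fix_eta. ring. }
      exact (deriv_const_zero a b _ t _ d Ht D Hpl). }
    assert (P2 : n1 * Derive (Derive x) s0 + n2 * Derive (Derive y) s0 + n3 * Derive (Derive z) s0 = 0).
    { destruct (Cx s0 H0) as [_ [dx _]]. destruct (Cy s0 H0) as [_ [dy _]]. destruct (Cz s0 H0) as [_ [dz _]].
      assert (D : is_derive (fun t => n1 * Derive x t + n2 * Derive y t + n3 * Derive z t) s0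
                   (n1 * Derive (Derive x) s0 + n2 * Derive (Derive y) s0 + n3 * Derive (Derive z) s0)).
      { auto_derive. repeat split; auto. fix_eta. ring. }
      exact (deriv_const_zero a b _ s0 _ 0 H0 D P1). }
    specialize (P1 s0 H0).
    assert (F := curve_facts a b x y z s0 HC H0). simpl in F.
    destruct F as [E1 [E2 [E3 [E4 [E5 [_ [_ [_ E9]]]]]]]].
    destruct (HVa s0 H0) as [N1 [N2 N3]].
    assert (W := HVw s0 H0). rewrite (Hkap s0 H0), E4 in W.
    assert (Hcs : ang_mom x y z s0 - k0 * z s0 = - V3 s0) by (unfold ang_mom, V3; ring).
    rewrite Hcs. apply sqrt_sq_lt.
    assert (HV : V1 s0 <> 0 \/ V2 s0 <> 0).
    { destruct (Req_dec (V1 s0) 0) as [Z1|Z1]; [|tauto].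
      destruct (Req_dec (V2 s0) 0) as [Z2|Z2]; [|tauto]. exfalso.
      rewrite Z1, Z2 in N1, N3, W.
      assert (V3n : V3 s0 <> 0) by (intro Z3; rewrite Z3 in N1; nra).
      assert (z1 : Derive z s0 = 0).
      { 
        assert (N3' : V3 s0 * Derive z s0 = 0) by lra.
        apply Rmult_integral in N3' as [?|?]; [contradiction|assumption]. }
      assert (z2 : Derive (Derive z) s0 = 0).
      { assert (W' : V3 s0 * Derive (Derive z) s0 = 0) by lra.
        apply Rmult_integral in W' as [?|?]; [contradiction|assumption]. }
      rewrite z1 in P1, E2, E5. rewrite z2 in P2, E5, E9.
      set (D := Derive x s0 * Derive (Derive y) s0 - Derive y s0 * Derive (Derive x) s0).
      assert (DD : D * D = (Derive x s0 * Derive x s0 + Derive y s0 * Derive y s0) *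
          (Derive (Derive x) s0 * Derive (Derive x) s0 + Derive (Derive y) s0 * Derive (Derive y) s0)
          - (Derive x s0 * Derive (Derive x) s0 + Derive y s0 * Derive (Derive y) s0) ^ 2) by (unfold D; ring).
      assert (Dn : D <> 0).
      { intro HD. rewrite HD in DD.
        assert (G := Rle_0_sqr (geod_curv x y z s0)). unfold Rsqr in G. nra. }
      assert (M1 : n1 * D = Derive (Derive y) s0 * (n1 * Derive x s0 + n2 * Derive y s0 + n3 * 0)
                   - Derive y s0 * (n1 * Derive (Derive x) s0 + n2 * Derive (Derive y) s0 + n3 * 0)) by (unfold D; ring).
      assert (M2 : n2 * D = Derive x s0 * (n1 * Derive (Derive x) s0 + n2 * Derive (Derive y) s0 + n3 * 0)
                   - Derive (Derive x) s0 * (n1 * Derive x s0 + n2 * Derive y s0 + n3 * 0)) by (unfold D; ring).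
      rewrite P1, P2 in M1, M2.
      apply Hnp. split.
      - assert (n1 * D = 0) by lra. apply Rmult_integral in H as [?|?]; [assumption|contradiction].
      - assert (n2 * D = 0) by lra. apply Rmult_integral in H as [?|?]; [assumption|contradiction]. }
    replace (1 + k0 ^ 2) with (V1 s0 * V1 s0 + V2 s0 * V2 s0 + V3 s0 * V3 s0) by (rewrite N1; ring).
    destruct HV as [HV|HV].
    + assert (0 < V1 s0 * V1 s0) by (apply Rsqr_pos_lt; exact HV). assert (G := Rle_0_sqr (V2 s0)). unfold Rsqr in G. nra.
    + assert (0 < V2 s0 * V2 s0) by (apply Rsqr_pos_lt; exact HV). assert (G := Rle_0_sqr (V1 s0)). unfold Rsqr in G. nra.
Qed.
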